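(* Let $G$ be a finite group, $\Lambda$ an absolutely irreducible $\mathbb Z[G]$-module of finite rank, $W=\Lambda\otimes\mathbb Q$, $w$ a weight with associated form $(\,,\,)$, $H=\mathrm{Stab}_G(w)$, $d=[G:H]$, and let $\pi:X\to\mathbb P^1$ be a Galois covering with group $G$, $C=X/H$, $\varphi:X\to C$ the quotient map. Let $\{g_1,\dots,g_d\}$ be any set of representatives of the left cosets of $H$ in $G$. Then for every $x\in X$ and $c=\varphi(x)$, $$\overline S_w(c)=|H|^2\sum_{i=1}^d(w,g_iw)\,\varphi(g_i^{-1}(x)).$$
   Context: A weight of $\Lambda$ is $w\in W$ with $gw-w\in\Lambda$ for all $g\in G$. $(\,,\,)$ is the negative definite $G$-invariant symmetric bilinear form on $W$ such that (i) $(w,\lambda)\in\mathbb Z$ for all $\lambda\in\Lambda$, and (ii) every $G$-invariant symmetric bilinear form satisfying (i) is an integer multiple of it. $H=\{g\in G:gw=w\}$. $X$ is a smooth projective complex curve with faithful $G$-action and $X/G\cong\mathbb P^1$. With $\Gamma_g\subset X\times X$ the graph of $g$, $S_w=\sum_{g\in G}(w,gw)\Gamma_g$ (so $S_w(x)=\sum_g(w,gw)g(x)$), and $\overline S_w=(\varphi\times\varphi)_*S_w$ is the induced correspondence on $C$. *)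

(* Defs.v *)
From HB Require Import structures.
From mathcomp Require Import all_boot all_order all_algebra all_fingroup all_solvable all_field all_character.
Set Implicit Arguments. Unset Strict Implicit. Unset Printing Implicit Defensive.
Import Order.TTheory GRing.Theory Num.Theory.
Local Open Scope ring_scope.
Local Open Scope group_scope.

(* Lattice Lambda = Z^n (row vectors) inside W = Q^n, G acting through a
   rational matrix representation rG with integral entries.  mathcomp's
   representations act on the right (v *m rG g); the left action is
   g . v := v *m rG g^-1. *)

Section Lattice.
Variables (gT : finGroupType) (G : {group gT}) (n : nat).
Variable rG : mx_representation rat G n.

Definition is_int_rV (v : 'rV[rat]_n) : Prop := forall j, v 0 j \is a Num.int.

Definition int_repr : Prop :=
  forall g, g \in G -> forall i j, rG g i j \is a Num.int.

Definition wact (g : gT) (v : 'rV[rat]_n) : 'rV[rat]_n := v *m rG g^-1.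

Definition bform (B : 'M[rat]_n) (u v : 'rV[rat]_n) : rat := (u *m B *m v^T)%R 0 0.

Definition is_weight (w : 'rV[rat]_n) : Prop :=
  forall g, g \in G -> is_int_rV (wact g w - w)%R.

Definition form_invariant (B : 'M[rat]_n) : Prop :=
  forall g u v, g \in G -> bform B (wact g u) (wact g v) = bform B u v.

Definition form_symmetric (B : 'M[rat]_n) : Prop := B^T = B.

Definition form_neg_definite (B : 'M[rat]_n) : Prop :=
  forall v : 'rV[rat]_n, v != 0 -> (bform B v v < 0)%R.

Definition form_int_on_w (w : 'rV[rat]_n) (B : 'M[rat]_n) : Prop :=
  forall l, is_int_rV l -> bform B w l \is a Num.int.

(* The form (,) associated to the weight w: negative definite, G-invariant,
   symmetric, (i) integral on (w, Lambda), (ii) generating all such forms. *)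
Definition assoc_form (w : 'rV[rat]_n) (B : 'M[rat]_n) : Prop :=
  [/\ form_neg_definite B, form_invariant B, form_symmetric B,
      form_int_on_w w B &
      forall B', form_invariant B' -> form_symmetric B' -> form_int_on_w w B' ->
        exists k : int, B' = (k%:~R *: B)%R].

Definition wstab (w : 'rV[rat]_n) : {set gT} := [set g in G | wact g w == w].

End Lattice.

(* Points and divisors (formal finite Q-linear combinations of points). *)
Section Divisors.
Variables (gT : finGroupType) (X C : eqType).

Definition divisor (T : eqType) := seq (T * rat).

Definition dcoef (T : eqType) (D : divisor T) (t : T) : rat :=
  (\sum_(p <- D) (p.1 == t)%:R * p.2)%R.

Definition dpush (phi : X -> C) (D : divisor X) : divisor C :=
  [seq (phi p.1, p.2) | p <- D].

(* action of the correspondence sum_{g in A} n_g Gamma_g on a divisor of X *)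
Definition corr_apply (act : gT -> X -> X) (ng : gT -> rat) (A : {set gT})
  (D : divisor X) : divisor X :=
  [seq (act gp.1 gp.2.1, (ng gp.1 * gp.2.2)%R) | gp <- [seq (g, p) | g <- enum A, p <- D]].

Definition pt_action (G : {set gT}) (act : gT -> X -> X) : Prop :=
  (forall x, act 1 x = x) /\
  (forall g h x, g \in G -> h \in G -> act (g * h) x = act g (act h x)).

Definition pt_faithful (G : {set gT}) (act : gT -> X -> X) : Prop :=
  forall g, g \in G -> (forall x, act g x = x) -> g = 1.

(* point stabilizer of y in H = ramification index of X -> X/H at y *)
Definition ram_index (act : gT -> X -> X) (H : {set gT}) (y : X) : nat :=
  #|[set h in H | act h y == y]|.

(* D is (a representative of) the pull-back divisor phi^*(c) for the
   quotient map phi : X -> X/H: each y over c with multiplicity e_y. *)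
Definition is_pullback (act : gT -> X -> X) (H : {set gT}) (phi : X -> C)
  (c : C) (D : divisor X) : Prop :=
  forall y, dcoef D y = if phi y == c then (ram_index act H y)%:R else 0%R.

End Divisors.

(* Main.v *)
Require Import Defs.
From HB Require Import structures.
From mathcomp Require Import all_boot all_order all_algebra all_fingroup all_solvable all_field all_character.
From mathcomp Require Import ring.
Import Order.TTheory GRing.Theory Num.Theory.
Local Open Scope ring_scope.

Lemma pull_sum (gT : finGroupType) (G H : {group gT}) (X C : eqType)
  (act : gT -> X -> X) (phi : X -> C) (x : X) (D : divisor X) (f : X -> rat) :
  (H \subset G)%g -> pt_action G act ->
  (forall x y : X, phi x = phi y <-> exists2 h, h \in H & y = act h x) ->
  is_pullback act H phi (phi x) D ->
  \sum_(p <- D) f p.1 * p.2 = \sum_(h in H) f (act h x).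
Proof.
move=> sHG [act1 actM] orb pb.
set s := undup (unzip1 D).
have us : uniq s by rewrite undup_uniq.
have step1 : \sum_(p <- D) f p.1 * p.2 = \sum_(y <- s) f y * dcoef D y.
  rewrite /dcoef.
  under [RHS]eq_bigr => y _ do rewrite mulr_sumr.
  rewrite exchange_big /= big_seq [RHS]big_seq; apply: eq_bigr => p pD.
  rewrite (bigD1_seq p.1) //=; last by rewrite mem_undup; apply: map_f.
  rewrite eqxx mul1r big1 ?addr0 //.
  by move=> y; rewrite eq_sym => /negbTE ->; rewrite mul0r mulr0.
have ins : forall h, h \in H -> act h x \in s.
  move=> h hH; rewrite mem_undup; apply/negPn/negP => nin.
  have : dcoef D (act h x) = 0.
    rewrite /dcoef big_seq big1 // => p pD.
    case: eqP => [e|]; last by rewrite mul0r.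
    by case/negP: nin; rewrite -e; apply: map_f.
  rewrite pb.
  have -> : phi (act h x) == phi x.
    by apply/eqP; symmetry; apply/orb; exists h.
  move/eqP; rewrite pnatr_eq0 => /eqP/cards0_eq/setP/(_ 1%g).
  by rewrite !inE group1 act1 eqxx.
have step2 : \sum_(h in H) f (act h x)
   = \sum_(y <- s) f y * #|[set h in H | act h x == y]|%:R.
  transitivity (\sum_(h in H) \sum_(y <- s) ((act h x == y)%:R * f y)).
    apply: eq_bigr => h hH.
    rewrite (bigD1_seq (act h x)) ?ins //= eqxx mul1r big1 ?addr0 //.
    by move=> y; rewrite eq_sym => /negbTE ->; rewrite mul0r.
  rewrite exchange_big /=; apply: eq_bigr => y _.
  rewrite -mulr_suml mulrC; congr (_ * _).
  rewrite -sum1_card natr_sum [RHS]big_mkcond [LHS]big_mkcond /=; apply: eq_bigr => h _.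
  by rewrite inE; case: (h \in H); case: (_ == _).
rewrite step1 step2.  apply: eq_bigr => y _; congr (_ * _).
rewrite pb /ram_index; case: eqP => [e | ne].
  have [h0 h0H ->] : exists2 h, h \in H & y = act h x by apply/orb.
  have h0G : h0 \in G by apply: (subsetP sHG).
  congr (_%:R).
  rewrite -(card_rcoset _ h0); apply: eq_card => h.
  rewrite mem_rcoset !inE groupMr ?groupV //.
  case hH: (h \in H) => //=.
  have hG : h \in G by apply: (subsetP sHG).
  by rewrite -!actM ?groupM ?groupV // mulgKV.
suff -> : [set h in H | act h x == y] = set0 by rewrite cards0.
apply/setP => h.
rewrite !inE; apply/negbTE/negP => /andP [hH /eqP hy].
by apply: ne; symmetry; apply/orb; exists h.
Qed.

Lemma r_in_G (gT : finGroupType) (G H : {group gT}) (r : seq gT) :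
  (H \subset G)%g -> perm_eq [seq (g *: H)%g | g <- r] (enum (lcosets H G)) ->
  forall g, g \in r -> g \in G.
Proof.
move=> sHG pr g gr.
have : (g *: H)%g \in lcosets H G.
  by rewrite -mem_enum -(perm_mem pr); apply: map_f.
case/lcosetsP => g' g'G e.
have : g \in (g' *: H)%g by rewrite -e lcoset_refl.
case/lcosetP => a aH ->; rewrite groupM //; exact: (subsetP sHG).
Qed.

Lemma coset_sum (gT : finGroupType) (G H : {group gT}) (r : seq gT) (F : gT -> rat) :
  (H \subset G)%g -> perm_eq [seq (g *: H)%g | g <- r] (enum (lcosets H G)) ->
  \sum_(k in G) F k = \sum_(g <- r) \sum_(h in H) F (g * h)%g.
Proof.
move=> sHG pr.
have triv : trivIset (lcosets H G).
  apply/trivIsetP => A B /lcosetsP [a aG ->] /lcosetsP [b bG ->] neq.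
  apply/pred0P => z /=; apply/negP => /andP [za zb].
  case/negP: neq; apply/eqP.
  by rewrite -(lcoset_eqP za) -(lcoset_eqP zb).
have cov : cover (lcosets H G) = G.
  apply/setP => z; apply/bigcupP/idP.
    case=> A /lcosetsP [a aG ->] /lcosetP [b bH ->].
    by rewrite groupM //; exact: (subsetP sHG).
  by move=> zG; exists (z *: H)%g; [apply/lcosetsP; exists z | rewrite lcoset_refl].
rewrite -{1}cov big_trivIset // -big_enum -(perm_big _ pr) big_map.
apply: eq_bigr => g _.
rewrite (reindex_inj (mulgI g)); apply: eq_bigl => h.
by rewrite mem_lcoset mulKg.
Qed.

Lemma bform_sym n (B : 'M[rat]_n) u v : B^T = B -> bform B u v = bform B v u.
Proof.
move=> sB; rewrite /bform.
have -> : u *m B *m v^T = (v *m B *m u^T)^T by rewrite !trmx_mul trmxK sB mulmxA.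
by rewrite mxE.
Qed.

Section F.
Variables (gT : finGroupType) (G H : {group gT}) (n : nat)
  (rG : mx_representation rat G n) (w : 'rV[rat]_n) (B : 'M[rat]_n).
Hypothesis sHG : (H \subset G)%g.
Hypothesis Hst : H :=: wstab rG w.
Hypothesis inv : form_invariant rG B.
Hypothesis sym : form_symmetric B.

Let ng g := bform B w (wact rG g w).

Lemma stabV {h} : h \in H -> w *m rG (h^-1)%g = w.
Proof. by rewrite Hst inE => /andP [_ /eqP]. Qed.

Lemma stab {h} : h \in H -> w *m rG h = w.
Proof.
move=> hH; have hG : h \in G by exact: (subsetP sHG).
by rewrite -{1}(stabV hH) -mulmxA -repr_mxM ?groupV // mulVg repr_mx1 mulmx1.
Qed.

Lemma ngA k h : k \in G -> h \in H -> ng (k * h^-1)%g = ng k.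
Proof.
move=> kG hH; have hG : h \in G by exact: (subsetP sHG).
rewrite /ng /wact invMg invgK repr_mxM ?groupV // mulmxA stab //.
Qed.

Lemma ngB g h : g \in G -> h \in H -> ng (h * g^-1)%g = ng g.
Proof.
move=> gG hH; have hG : h \in G by exact: (subsetP sHG).
rewrite /ng /wact invMg invgK repr_mxM ?groupV // mulmxA.
rewrite -{1}(stabV hH).
have := inv h w (w *m rG g) hG; rewrite /wact => ->.
have := inv g w (w *m rG g) gG; rewrite /wact => <-.
rewrite -mulmxA -repr_mxM ?groupV // mulgV repr_mx1 mulmx1.
by rewrite bform_sym.
Qed.
End F.

Theorem proposition2p2 (gT : finGroupType) (G H : {group gT}) (n : nat)
  (rG : mx_representation rat G n) (w : 'rV[rat]_n) (B : 'M[rat]_n)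
  (X C : eqType) (act : gT -> X -> X) (phi : X -> C) (r : seq gT) :
  int_repr rG ->
  mx_absolutely_irreducible rG ->
  is_weight rG w ->
  assoc_form rG w B ->
  H :=: wstab rG w ->
  pt_action G act ->
  pt_faithful G act ->
  (forall c : C, exists x : X, phi x = c) ->
  (forall x y : X, phi x = phi y <-> exists2 h, h \in H & y = act h x) ->
  perm_eq [seq (g *: H)%g | g <- r] (enum (lcosets H G)) ->
  forall (x : X) (D : divisor X),
    is_pullback act H phi (phi x) D ->
    forall c' : C,
      dcoef (dpush phi (corr_apply act (fun g => bform B w (wact rG g w)) G D)) c'
      = dcoef [seq (phi (act (g^-1)%g x), (#|H| ^ 2)%:R * bform B w (wact rG g w))
             | g <- r] c'.
Proof.
move=> _ _ _ [_ inv sym _ _] Hst pa _ _ orb pr x D pb c'.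
have sHG : (H \subset G)%g by rewrite Hst; apply/subsetP => g; rewrite inE => /andP [].
have [act1 actM] := pa.
set ng := fun g => bform B w (wact rG g w).
set E := fun k => (phi (act k x) == c')%:R * ng k.
rewrite /dcoef /dpush /corr_apply !big_map big_allpairs big_enum /=.
have ngC : forall g h, g \in G -> h \in H -> ng (g * h)%g = ng g.
  move=> g h gG hH; have hG : h \in G by exact: (subsetP sHG).
  by rewrite /ng /wact invMg repr_mxM ?groupV // mulmxA (stabV _ _ _ _ _ _ Hst hH).
transitivity (\sum_(g in G) \sum_(h in H) E (g * h)%g).
  apply: eq_bigr => g gG.
  transitivity (\sum_(p <- D) (fun y => (phi (act g y) == c')%:R * ng g) p.1 * p.2).
    by apply: eq_bigr => p _; rewrite /= mulrA.
  rewrite (@pull_sum _ _ _ _ _ _ _ _ _ (fun y => (phi (act g y) == c')%:R * ng g) sHG pa orb pb).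
  apply: eq_bigr => h hH; have hG : h \in G by exact: (subsetP sHG).
  by rewrite /E ngC // actM.
rewrite exchange_big /=.
transitivity (\sum_(h in H) \sum_(k in G) E k).
  apply: eq_bigr => h hH; have hG : h \in G by exact: (subsetP sHG).
  rewrite [RHS](reindex_inj (mulIg h)); apply: eq_bigl => k.
  by rewrite groupMr.
rewrite sumr_const.
rewrite (reindex_inj invg_inj) /=.
under eq_bigl => k do rewrite groupV.
rewrite (coset_sum _ _ _ _ _ sHG pr).
rewrite -[LHS]mulr_natr mulr_suml big_seq [RHS]big_seq; apply: eq_bigr => g gr.
have gG := r_in_G _ _ _ _ sHG pr _ gr.
have -> : \sum_(h in H) E ((g * h)^-1)%g = \sum_(h in H) ((phi (act (g^-1)%g x) == c')%:R * ng g).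
  apply: eq_bigr => h hH; have hG : h \in G by exact: (subsetP sHG).
  have hB := ngB _ _ _ _ _ _ _ sHG Hst inv sym g (h^-1)%g gG (groupVr hH); simpl in hB.
  rewrite /E /ng invMg actM ?groupV // hB.
  have -> : phi (act (h^-1)%g (act (g^-1)%g x)) = phi (act (g^-1)%g x) => //.
  by symmetry; apply/orb; exists (h^-1)%g; rewrite ?groupV.
rewrite sumr_const /ng.
by rewrite -mulr_natr natrX expr2; ring.
Qed.
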